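(* Let $F$ be a field and $A$ a unital $F$-algebra. The following are equivalent: (i) $A$ is von-Neumann finite; (ii) every subalgebra of $A$ generated by at most two elements is von-Neumann finite; (iii) any two elements $a,b\in A$ with $ab\in F\setminus\{0\}$ (i.e. $ab$ a nonzero scalar multiple of $1$) commute. Likewise, the following are equivalent: (i') $A$ is reversible; (ii') every subalgebra of $A$ generated by at most two elements is reversible; (iii') any two elements $a,b\in A$ with $ab=0$ commute.
   Context: An $F$-algebra is a vector space with bilinear, not necessarily associative, multiplication; subalgebras are unital subalgebras. $A$ is von-Neumann finite if $ab=1$ implies $ba=1$, and reversible if $ab=0$ implies $ba=0$, for all $a,b\in A$. *)

(* Defs.v *)
From mathcomp Require Import all_boot all_algebra.
Set Implicit Arguments. Unset Strict Implicit. Unset Printing Implicit Defensive.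
Import GRing.Theory.
Local Open Scope ring_scope.

(* A (not necessarily associative) unital F-algebra: an F-vector space V
   with a bilinear multiplication [mul] and a two-sided unit [one]. *)
Definition unital_algebra (F : fieldType) (V : lmodType F)
  (mul : V -> V -> V) (one : V) : Prop :=
  [/\ forall (c : F) (x y z : V), mul (c *: x + y) z = c *: mul x z + mul y z,
      forall (c : F) (x y z : V), mul x (c *: y + z) = c *: mul x y + mul x z,
      forall x : V, mul one x = x
    & forall x : V, mul x one = x].

Definition is_subalgebra (F : fieldType) (V : lmodType F)
  (mul : V -> V -> V) (one : V) (S : V -> Prop) : Prop :=
  [/\ S 0, S one,
      forall x y, S x -> S y -> S (x + y),
      forall (c : F) x, S x -> S (c *: x)
    & forall x y, S x -> S y -> S (mul x y)].

Definition gen2 (F : fieldType) (V : lmodType F)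
  (mul : V -> V -> V) (one : V) (a b : V) : V -> Prop :=
  fun x => forall S : V -> Prop, is_subalgebra mul one S -> S a -> S b -> S x.

Definition vN_finite_on (V : Type) (mul : V -> V -> V) (one : V)
  (S : V -> Prop) : Prop :=
  forall x y, S x -> S y -> mul x y = one -> mul y x = one.

Definition reversible_on (F : fieldType) (V : lmodType F) (mul : V -> V -> V)
  (S : V -> Prop) : Prop :=
  forall x y, S x -> S y -> mul x y = 0 -> mul y x = 0.

(* Main.v *)
Require Import Defs.
From mathcomp Require Import all_boot all_algebra.
Import GRing.Theory.
Local Open Scope ring_scope.

Theorem lemma3p3 (F : fieldType) (V : lmodType F)
  (mul : V -> V -> V) (one : V) :
  unital_algebra mul one ->
  ((vN_finite_on mul one (fun _ => True) <->
      (forall a b : V, vN_finite_on mul one (gen2 mul one a b))) /\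
   (vN_finite_on mul one (fun _ => True) <->
      (forall a b : V, (exists c : F, c != 0 /\ mul a b = c *: one) ->
                       mul a b = mul b a))) /\
  ((reversible_on mul (fun _ => True) <->
      (forall a b : V, reversible_on mul (gen2 mul one a b))) /\
   (reversible_on mul (fun _ => True) <->
      (forall a b : V, mul a b = 0 -> mul a b = mul b a))).
Proof.
case=> Hl Hr H1l H1r.
have M0r : forall x, mul x 0 = 0.
  move=> x; have := Hr 1 x 0 0; rewrite !(scale1r, addr0) => E.
  apply: (@addrI _ (mul x 0)); by rewrite addr0 -E.
have M0l : forall x, mul 0 x = 0.
  move=> x; have := Hl 1 0 0 x; rewrite !(scale1r, addr0) => E.
  apply: (@addrI _ (mul 0 x)); by rewrite addr0 -E.
have MZr : forall c x y, mul x (c *: y) = c *: mul x y.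
  by move=> c x y; have := Hr c x y 0; rewrite addr0 M0r addr0.
have MZl : forall c x y, mul (c *: x) y = c *: mul x y.
  by move=> c x y; have := Hl c x 0 y; rewrite addr0 M0l addr0.
have G1 : forall a b, gen2 mul one a b a by move=> a b S _ Sa.
have G2 : forall a b, gen2 mul one a b b by move=> a b S _ _ Sb.
split; split; split.
- by move=> H a b x y _ _; apply: H.
- by move=> H x y _ _ Hxy; apply: (H x y x y (G1 _ _) (G2 _ _)).
- move=> H a b [c [c0 Hab]].
  have E : mul a (c^-1 *: b) = one by rewrite MZr Hab scalerA mulVf // scale1r.
  have := H _ _ I I E; rewrite MZl => E'.
  have : c *: (c^-1 *: mul b a) = c *: one by rewrite E'.
  by rewrite scalerA mulfV // scale1r Hab => ->.
- move=> H x y _ _ Hxy; rewrite -Hxy; symmetry; apply: H.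
  by exists 1; rewrite oner_eq0 scale1r.
- by move=> H a b x y _ _; apply: H.
- by move=> H x y _ _ Hxy; apply: (H x y x y (G1 _ _) (G2 _ _)).
- by move=> H a b Hab; rewrite Hab (H a b I I Hab).
- by move=> H x y _ _ Hxy; rewrite -(H x y Hxy).
Qed.
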